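(* For every temporal oriented tree $\mathcal T$, the minimum cardinality of a temporal path cover of $\mathcal T$ equals the minimum cardinality of a clique cover of the connectivity graph $G$ of $\mathcal T$.
   Context: A temporal digraph is a pair $(D,\lambda)$ with $D=(V,A)$ a finite digraph and $\lambda:A\to 2^{\{1,\dots,t_{\max}\}}$ giving the time-steps at which each arc is active. A temporal oriented tree $\mathcal T=(T,\lambda)$ is one whose underlying digraph $T$ is an orientation of a tree. A temporal path is a sequence $(v_1,v_2,t_1),\dots,(v_{k-1},v_k,t_{k-1})$ with pairwise distinct $v_i$, $\overrightarrow{v_iv_{i+1}}\in A$, $t_i\in\lambda(\overrightarrow{v_iv_{i+1}})$ and $t_1<\dots<t_{k-1}$; a single vertex is also a temporal path. A temporal path cover is a collection of temporal paths whose vertex sets together contain $V$. Two vertices $u\ne v$ are temporally connected if there is a temporal path from $u$ to $v$ or from $v$ to $u$. The connectivity graph of $\mathcal T$ is the undirected graph $G$ with $V(G)=V(T)$ and $uv\in E(G)$ iff $u\neq v$ and $u,v$ are temporally connected. A clique cover of $G$ is a set of complete subgraphs of $G$ whose vertex sets cover $V(G)$. *)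

(* Defs.v *)
From mathcomp Require Import all_boot.
Set Implicit Arguments. Unset Strict Implicit. Unset Printing Implicit Defensive.

Section TemporalTrees.
Variable V : finType.

Definition undirected (a : rel V) : rel V := fun x y => a x y || a y x.

Definition is_tree (e : rel V) : Prop :=
  (forall x, ~~ e x x) /\ (forall x y, e x y = e y x) /\
  (forall x y, connect e x y) /\
  (forall c : seq V, uniq c -> 2 < size c -> ~~ cycle e c).

Definition oriented_tree (a : rel V) : Prop :=
  (forall x, ~~ a x x) /\ (forall x y, a x y -> ~~ a y x) /\
  is_tree (undirected a).

(* Labelling lam : V -> V -> nat -> bool, [lam x y t] means the arc xy is
   active at time t; a proper labelling assigns times in {1,...,tmax} to arcs
   only. *)
Definition labelling_ok (a : rel V) (tmax : nat) (lam : V -> V -> nat -> bool) :=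
  forall x y t, lam x y t -> a x y /\ 1 <= t <= tmax.

Definition temporal_path (a : rel V) (lam : V -> V -> nat -> bool) (p : seq V) : Prop :=
  exists x0 : V, exists ts : seq nat,
    [/\ p != [::], uniq p, size ts = (size p).-1, sorted ltn ts &
     forall i, i < (size p).-1 ->
       a (nth x0 p i) (nth x0 p i.+1) && lam (nth x0 p i) (nth x0 p i.+1) (nth 0 ts i)].

Definition temporal_path_cover (a : rel V) lam (P : seq (seq V)) : Prop :=
  uniq P /\ (forall p, p \in P -> temporal_path a lam p) /\
  (forall v : V, exists2 p, p \in P & v \in p).

Definition temporally_connected (a : rel V) lam (u v : V) : Prop :=
  u != v /\
  exists p, temporal_path a lam p /\
    ((head u p = u /\ last u p = v) \/ (head v p = v /\ last v p = u)).

Definition conn_clique (a : rel V) lam (K : {set V}) : Prop :=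
  forall u v, u \in K -> v \in K -> u != v -> temporally_connected a lam u v.

Definition conn_clique_cover (a : rel V) lam (C : {set {set V}}) : Prop :=
  (forall K, K \in C -> conn_clique a lam K) /\
  (forall v : V, exists2 K, K \in C & v \in K).

End TemporalTrees.

(* Main.v *)
Require Import Defs.
From mathcomp Require Import all_boot.
Set Implicit Arguments. Unset Strict Implicit. Unset Printing Implicit Defensive.

Lemma uniq_mid (T : eqType) (s1 s2 : seq T) x :
  uniq (s1 ++ x :: s2) -> x \notin s1.
Proof. by rewrite cat_uniq /= => /and3P[_ /norP[] ]. Qed.

Lemma otree_uniq (V : finType) (a : rel V) :
  oriented_tree a -> forall x s, path a x s -> uniq (x :: s).
Proof.
move=> [loop [anti [_ [_ [_ nocyc]]]]] x s; elim: s x => [|y t IH] x //=.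
case/andP=> axy pt; have /= ut := IH _ pt; rewrite ut andbT.
have xy : x != y by apply/negP=> /eqP exy; subst y; move: (loop x); rewrite axy.
rewrite !inE negb_or xy /=.
apply/negP=> xt; case/splitPr: xt ut pt => a1 b1 ut pt.
have xa1 : x \notin a1 by move: ut => /andP[_ /uniq_mid].
case: a1 xa1 ut pt => [|z a1] xa1 ut pt.
  by move: pt => /= /andP[ayx _]; move: (anti _ _ axy); rewrite ayx.
have := nocyc [:: x, y, z & a1]; move/(_ _ _)/negP; apply; last first.
- rewrite /cycle; apply: (@sub_path _ a); first by move=> u v; rewrite /undirected => ->.
  rewrite rcons_path /= axy; move: pt; rewrite cat_path /=.
  by case/and3P=> -> -> _.
- by [].
- move: ut => /andP[yn u1].
  move: yn; rewrite mem_cat !inE !negb_or => /andP[/andP[yz ya1] _].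
  move: u1; rewrite cat_uniq => /and3P[u1 _ _].
  move: xa1; rewrite inE negb_or => /andP[xz xa1].
  rewrite /= !inE !negb_or xy xz xa1 yz ya1 /=. exact: u1.
Qed.

Lemma cyc_core (V : finType) (e : rel V) (esym : forall u v, e u v = e v u)
  x a1 b1 a2 b2 w :
  path e x (a1 ++ w :: b1) -> path e x (a2 ++ w :: b2) ->
  uniq (x :: a1 ++ w :: b1) -> uniq (x :: a2 ++ w :: b2) ->
  (forall v, v \in a1 -> v \notin a2 ++ w :: b2) ->
  (a1 != [::]) || (a2 != [::]) ->
  exists c, [/\ uniq c, 2 < size c & cycle e c].
Proof.
move=> p1 p2 u1 u2 dis ne; exists (x :: a1 ++ w :: rev a2); split.
have wa2 : w \notin a2 by move: u2 => /andP[_ /uniq_mid].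
- move: u1 u2; rewrite /= !mem_cat !inE !negb_or !cat_uniq /=.
  rewrite !mem_rev rev_uniq.
  case/andP=> /and3P[xa1 xw xb1] /and3P[ua1 _ /andP[wb1 _]].
  case/andP=> /and3P[xa2 _ _] /and3P[ua2 _ /andP[_ _]].
  rewrite xa1 xw xa2 ua1 ua2 /= andbT.
  have wa1 : w \notin a1.
    by apply/negP=> /dis; rewrite mem_cat inE eqxx orbT.
  rewrite (negbTE wa1) wa2 has_rev /= andbT; apply/hasPn=> v va2; apply/negP=> va1.
  by move: (dis _ va1); rewrite mem_cat va2.
- rewrite /= size_cat /= size_rev; case: a1 ne {p1 u1 dis} => [|? ?];
  case: a2 {p2 u2} => [|? ?] //= _; rewrite ?addnS ?addSn //.
- rewrite /cycle rcons_cat rcons_cons cat_path; move: p1; rewrite cat_path.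
  case/andP=> -> /= /andP[-> _] /=.
  rewrite -rev_cons -(belast_rcons x a2 w) -{1}(last_rcons x a2 w) rev_path.
  rewrite (@eq_path _ _ e); last by move=> u v; rewrite esym.
  by move: p2; rewrite -cat_rcons cat_path => /andP[].
Qed.

Lemma last_in (T : eqType) (x : T) s : s != [::] -> last x s \in s.
Proof. by case: s => // y t _; rewrite /= (mem_last y t). Qed.

Lemma sub_undir (V : finType) (a : rel V) : subrel a (undirected a).
Proof. by move=> u v; rewrite /undirected => ->. Qed.

Lemma first_common (T : eqType) (s1 s2 : seq T) :
  has (fun v => v \in s2) s1 ->
  exists a1 w b1, [/\ s1 = a1 ++ w :: b1, w \in s2 &
                     forall v, v \in a1 -> v \notin s2].
Proof.
elim: s1 => [|y t IH] //= /orP[ys2|ht].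
  by exists [::], y, t; split.
case: (boolP (y \in s2)) => ys2; first by exists [::], y, t; split.
have [a1 [w [b1 [-> ws dis]]]] := IH ht.
exists (y :: a1), w, b1; split => // v; rewrite inE => /orP[/eqP->|]//; exact: dis.
Qed.

Lemma otree_unique (V : finType) (a : rel V) :
  oriented_tree a -> forall x s1 s2, path a x s1 -> path a x s2 ->
  last x s1 = last x s2 -> s1 = s2.
Proof.
move=> ot; have U := otree_uniq ot.
move: ot => [loop [anti [_ [esym [_ nocyc]]]]].
move=> x s1; elim: s1 x => [|y1 t1 IH] x [|y2 t2] // p1 p2 hl.
- have := U _ _ p2; move: hl => /= ->; rewrite /= => /andP[/negP[]]; exact: mem_last.
- have := U _ _ p1; move: hl => /= <-; rewrite /= => /andP[/negP[]]; exact: mem_last.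
case: (eqVneq y1 y2) => [ey|ne].
  subst y2; congr (_ :: _); apply: (IH y1).
  - by case/andP: p1.
  - by case/andP: p2.
  - exact: hl.
exfalso.
have u1 := U _ _ p1; have u2 := U _ _ p2.
have {}p1 := sub_path (@sub_undir _ a) p1.
have {}p2 := sub_path (@sub_undir _ a) p2.
move: p1 p2 u1 u2 hl ne.
set s1 := y1 :: t1; set s2 := y2 :: t2.
have -> : y1 = head x s1 by [].
have -> : y2 = head x s2 by [].
have : s1 != [::] by [].
have : s2 != [::] by [].
clearbody s1 s2; clear IH.
move=> ns2 ns1 p1 p2 u1 u2 hl ne.
have hs : has (fun v => v \in s2) s1.
  apply/hasP; exists (last x s1); first exact: last_in.
  by rewrite hl; exact: last_in.
have [a1 [w [b1 [def1 ws2 dis1]]]] := first_common hs.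
subst s1.
case/splitPr: ws2 dis1 p2 u2 ne => a2 b2 dis p2 u2 ne.
have nn : (a1 != [::]) || (a2 != [::]).
  by case: a1 ne {hs ns1 hl p1 u1 dis} => [|? ?] //=; case: a2 {ns2 p2 u2} => [|? ?] //=; rewrite eqxx.
have [c [uc sc cc]] := cyc_core (esym) p1 p2 u1 u2 dis nn.
by apply: (negP (nocyc c uc sc)).
Qed.
From mathcomp Require Import zify.

Lemma tp_path (V : finType) (a : rel V) lam p :
  temporal_path a lam p -> exists x s, p = x :: s /\ path a x s.
Proof.
move=> [x0 [ts [ne up sz so H]]]; case: p ne up sz H => [|x s] // _ _ _ H.
exists x, s; split => //; apply/(pathP x0) => i hi.
by case/andP: (H i hi).
Qed.

Lemma tp_single (V : finType) (a : rel V) lam v : temporal_path a lam [:: v].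
Proof. by exists v, [::]; split. Qed.

Lemma tp_slice (V : finType) (a : rel V) lam p i j :
  temporal_path a lam p -> i <= j -> j < size p ->
  temporal_path a lam (drop i (take j.+1 p)).
Proof.
move=> [x0 [ts [ne up sz so H]]] ij js.
have szq : size (drop i (take j.+1 p)) = (j - i).+1.
  rewrite size_drop size_take; case: ltnP => h; lia.
exists x0, (drop i (take j ts)); split.
- by rewrite -size_eq0 szq.
- exact/drop_uniq/take_uniq.
- rewrite szq size_drop size_take sz; case: ltnP => h; lia.
- apply: (subseq_sorted ltn_trans _ so).
  exact: (subseq_trans (drop_subseq _ _) (take_subseq _ _)).
- move=> k; rewrite szq /= => hk.
  rewrite !nth_drop !nth_take; try lia.
  rewrite addnS; apply: H; lia.
Qed.

Lemma tp_conn (V : finType) (a : rel V) lam p u v :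
  temporal_path a lam p -> u \in p -> v \in p -> u != v ->
  temporally_connected a lam u v.
Proof.
move=> tp up vp uv; split => //.
have key : forall u v, u \in p -> v \in p -> index u p <= index v p ->
   temporal_path a lam (drop (index u p) (take (index v p).+1 p)) /\
   head u (drop (index u p) (take (index v p).+1 p)) = u /\
   last u (drop (index u p) (take (index v p).+1 p)) = v.
  move=> u' v' up' vp' le; split; first by apply: tp_slice; rewrite // index_mem.
  have szq : size (drop (index u' p) (take (index v' p).+1 p)) =
     (index v' p - index u' p).+1.
    have h2 : index v' p < size p by rewrite index_mem.
    rewrite size_drop size_take; case: ltnP => h; lia.
  split.
    rewrite -nth0 nth_drop nth_take ?addn0 ?nth_index //; lia.
  rewrite -nth_last szq /= nth_drop nth_take; last lia.
  by rewrite subnKC // nth_index.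
case: (leqP (index u p) (index v p)) => h.
  have [t [h1 h2]] := key u v up vp h.
  by exists (drop (index u p) (take (index v p).+1 p)); split => //; left.
have [t [h1 h2]] := key v u vp up (ltnW h).
by exists (drop (index v p) (take (index u p).+1 p)); split => //; right.
Qed.

From Stdlib Require Import Classical.

Lemma ex_max_prop (P : nat -> Prop) B n0 :
  P n0 -> (forall n, P n -> n <= B) ->
  exists n, P n /\ forall m, P m -> m <= n.
Proof.
move=> p0 hb; move: (leqnn (B - n0)); move: {2}(B - n0) => k.
elim: k n0 p0 => [|k IH] n0 p0 hk.
  exists n0; split => // m pm; have := hb m pm; lia.
case: (classic (exists m, P m /\ n0 < m)) => [[m [pm lt]]|nm].
  apply: (IH m pm); have := hb m pm; lia.
exists n0; split => // m pm; rewrite leqNgt; apply/negP => lt.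
by apply: nm; exists m.
Qed.

Lemma ex_min_prop (P : nat -> Prop) n0 :
  P n0 -> exists n, P n /\ forall m, P m -> n <= m.
Proof.
elim/ltn_ind: n0 => n0 IH p0.
case: (classic (exists m, P m /\ m < n0)) => [[m [pm lt]]|nm].
  exact: (IH m lt pm).
exists n0; split => // m pm; rewrite leqNgt; apply/negP => lt.
by apply: nm; exists m.
Qed.

Lemma tc_dir (V : finType) (a : rel V) lam u v :
  temporally_connected a lam u v ->
  exists s1, (temporal_path a lam (u :: s1) /\ last u s1 = v) \/
             (temporal_path a lam (v :: s1) /\ last v s1 = u).
Proof.
move=> [_ [p [tp [[h l]|[h l]]]]]; have [w [t [ep _]]] := tp_path tp;
  subst p; move: h l tp => /= -> l tp; exists t.
  by left.
by right.
Qed.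

Lemma tp_path' (V : finType) (a : rel V) lam x s :
  temporal_path a lam (x :: s) -> path a x s.
Proof. by move=> /tp_path [w [t [[-> ->]]]]. Qed.

Lemma tp_size (V : finType) (a : rel V) lam p :
  temporal_path a lam p -> size p <= #|V|.
Proof.
move=> [_ [_ [_ up _ _ _]]]; rewrite -(card_uniqP up); exact: max_card.
Qed.

Lemma clique_path (V : finType) (a : rel V) lam K x :
  oriented_tree a -> conn_clique a lam K -> x \in K ->
  exists p, temporal_path a lam p /\ forall v, v \in K -> v \in p.
Proof.
move=> ot cl xK0.
pose Cand n := exists x s, [/\ temporal_path a lam (x :: s), x \in K,
   last x s \in K & size s = n].
have c0 : Cand 0 by exists x, [::]; split => //; exact: tp_single.
have cb : forall n, Cand n -> n <= #|V|.
  move=> n [y [s [tp _ _ <-]]]; have := tp_size tp => /= h; lia.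
clear xK0; have [n [[{}x [s [tp xK lK sz]]] mx]] := ex_max_prop c0 cb.
have mx' : forall u s', temporal_path a lam (u :: s') -> u \in K ->
   last u s' \in K -> size s' <= size s.
  by move=> u s' t1 t2 t3; rewrite sz; apply: mx; exists u, s'.
exists (x :: s); split => // z zK.
case: (boolP (z \in x :: s)) => // zn; exfalso.
have ps := tp_path' tp.
have xz : x != z by apply/eqP=> e; subst z; rewrite mem_head in zn.
have yz : last x s != z by apply/eqP=> e; subst z; rewrite mem_last in zn.
have [s1 q1] := tc_dir (cl _ _ xK zK xz).
have [s2 q2] := tc_dir (cl _ _ lK zK yz).
have L := otree_unique ot; have U := otree_uniq ot.
case: q1 => [[t1 l1]|[t1 l1]]; have p1 := tp_path' t1;
  case: q2 => [[t2 l2]|[t2 l2]]; have p2 := tp_path' t2.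
- (* x->z, y->z *)
  have e : s1 = s ++ s2.
    apply: (L x); rewrite ?cat_path ?ps ?last_cat ?l1 ?l2 //.
  have := mx' _ _ t1 xK; rewrite l1 => /(_ zK); rewrite e size_cat.
  case: s2 {e t2 p2} l2 => [|? ?] /=; last by lia.
  by move=> ez; move: yz; rewrite ez eqxx.
- (* x->z, z->y *)
  have e : s = s1 ++ s2.
    apply: (L x); rewrite ?cat_path ?ps ?p1 ?last_cat ?l1 ?l2 //.
  move: zn; rewrite e -cat_cons mem_cat -l1 mem_last //.
- (* z->x, y->z *)
  have pw : path a z (s1 ++ s ++ s2) by rewrite !cat_path p1 l1 ps p2.
  have := U _ _ pw; rewrite /= => /andP[/negP[]].
  have ne : s2 != [::] by case: (s2) l2 => //= ez; move: yz; rewrite ez eqxx.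
  have : last z (s1 ++ s ++ s2) = z by rewrite !last_cat l1 l2.
  move=> <-; apply: last_in; by case: (s1) => //; case: (s) => //.
- (* z->x, z->y *)
  have e : s2 = s1 ++ s.
    apply: (L z); rewrite ?cat_path ?ps ?p1 ?p2 ?l1 ?last_cat ?l1 ?l2 //.
  have := mx' _ _ t2 zK; rewrite l2 => /(_ lK); rewrite e size_cat.
  case: s1 {e t1 p1} l1 => [|? ?] /=; last by lia.
  by move=> ez; move: xz; rewrite ez eqxx.
Qed.

Lemma cover_from_cliques (V : finType) (a : rel V) lam :
  oriented_tree a -> forall l : seq {set V},
  (forall K, K \in l -> conn_clique a lam K) ->
  exists P : seq (seq V), [/\ uniq P, forall p, p \in P -> temporal_path a lam p,
     size P <= size l &
     forall K v, K \in l -> v \in K -> exists2 p, p \in P & v \in p].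
Proof.
move=> ot; elim => [|K l IH] hl.
  by exists [::]; split => // K v.
have [P [uP tP sP cP]] : exists P : seq (seq V), [/\ uniq P,
   forall p, p \in P -> temporal_path a lam p, size P <= size l &
   forall K v, K \in l -> v \in K -> exists2 p, p \in P & v \in p].
  by apply: IH => K' K'l; apply: hl; rewrite inE K'l orbT.
case: (set_0Vmem K) => [K0 | [x xK]].
  exists P; split => //; first by rewrite /= ltnW // ltnS.
  move=> K' v; rewrite inE => /orP[/eqP->|K'l]; first by rewrite K0 inE.
  exact: cP.
have [p [tp Kp]] := clique_path ot (hl K (mem_head _ _)) xK.
exists (undup (p :: P)); split.
- exact: undup_uniq.
- move=> q; rewrite mem_undup inE => /orP[/eqP->//|]; exact: tP.
- apply: leq_trans (size_undup _) _; by rewrite /= ltnS.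
- move=> K' v; rewrite inE => /orP[/eqP->|K'l] vK.
    by exists p; rewrite ?mem_undup ?mem_head // Kp.
  have [q qP vq] := cP _ _ K'l vK.
  by exists q; rewrite // mem_undup inE qP orbT.
Qed.

Unset Implicit Arguments.

Theorem mainTheorem5 (V : finType) (a : rel V) (tmax : nat)
    (lam : V -> V -> nat -> bool) :
  oriented_tree a -> labelling_ok a tmax lam ->
  exists k : nat,
    ((exists2 P, temporal_path_cover a lam P & size P = k) /\
     (forall P, temporal_path_cover a lam P -> k <= size P)) /\
    ((exists2 C, conn_clique_cover a lam C & #|C| = k) /\
     (forall C, conn_clique_cover a lam C -> k <= #|C|)).
Proof.
move=> ot _.
pose Q n := exists2 P, temporal_path_cover a lam P & size P = n.
have q0 : Q (size [seq [:: v] | v <- enum V]).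
  exists [seq [:: v] | v <- enum V] => //; split; last split.
  - by rewrite map_inj_uniq ?enum_uniq // => u v [].
  - by move=> p /mapP [v _ ->]; exact: tp_single.
  - by move=> v; exists [:: v]; rewrite ?mem_head // map_f // mem_enum.
have [k [[P Pc Ps] mk]] := ex_min_prop q0.
have lower : forall C, conn_clique_cover a lam C -> k <= #|C|.
  move=> C [cl cv].
  have hl : forall K, K \in enum C -> conn_clique a lam K.
    by move=> K; rewrite mem_enum; exact: cl.
  have [P' [uP tP sP cP]] := cover_from_cliques ot hl.
  have : k <= size P'.
    apply: mk; exists P' => //; split => // ; split => // v.
    have [K KC vK] := cv v; apply: (cP K) => //; by rewrite mem_enum.
  by move=> h; apply: leq_trans h _; rewrite cardE.
exists k; split; split.
- by exists P.
- by move=> P' hP'; apply: mk; exists P'.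
- pose C0 := [set K | K \in [seq [set v in p] | p <- P]].
  have C0c : conn_clique_cover a lam C0.
    case: Pc => uP [tP cP]; split.
      move=> K; rewrite inE => /mapP [p pP ->] u v; rewrite !inE => up vp uv.
      exact: (tp_conn (tP p pP) up vp uv).
    move=> v; have [p pP vp] := cP v; exists [set v in p]; last by rewrite inE.
    by rewrite inE map_f.
  exists C0 => //; apply/eqP; rewrite eqn_leq lower // andbT.
  rewrite -Ps cardsE; apply: leq_trans (card_size _) _; by rewrite size_map.
- exact: lower.
Qed.
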